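(* Let $p\ge 2$ and let $\alpha,\beta>0$ be reals with $$\alpha\beta\ <\ \frac{2p}{\lceil \log_2 p\rceil+2}.$$ Then there exists an in-tree task graph $T$ in the Pebble Game model such that no schedule $S$ of $T$ on $p$ processors satisfies both $C_{\max}(S)\le\alpha\,C^*_p(T)$ and $M(S)\le \beta\, M^*_p(T)$. Consequently, no algorithm is both an $\alpha(p)$-approximation for makespan minimization and a $\beta(p)$-approximation for peak memory minimization on $p$ processors with $\alpha(p)\beta(p)<2p/(\lceil\log_2 p\rceil+2)$.
   Context: Model. An in-tree task graph $T$ has nodes $\{1,\dots,n\}$ and a root; every non-root node $i$ has a parent, and $\mathrm{Children}(i)$ is the set of children of $i$. Each node $i$ has a processing time $w_i\ge 0$, an execution-file size $n_i\ge 0$ and an output-file size $f_i\ge 0$. A schedule on $p$ identical processors assigns each node $i$ a processor and a start time $\sigma_i\ge 0$; node $i$ runs without preemption during $[\sigma_i,\sigma_i+w_i)$, a processor runs at most one node at a time, and a node may start only after all its children have completed. The makespan is $C_{\max}=\max_i(\sigma_i+w_i)$. Memory: the output file of $i$ (size $f_i$) occupies memory from the start of $i$ until the completion of the parent of $i$ (for the root, until the end of the schedule), and the execution file of $i$ occupies memory while $i$ runs. The memory used at time $t$ is the total size of files present at time $t$; the peak memory $M(S)$ is the supremum over $t$ of the memory used. $C^*_p(T)$ denotes the minimum makespan and $M^*_p(T)$ the minimum peak memory over all schedules of $T$ on $p$ processors. The Pebble Game model is the special case $f_i=1$, $w_i=1$, $n_i=0$ for all $i$. *)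

(* Defs.v *)
From Stdlib Require Import Reals List Arith.
Import ListNotations.
Open Scope R_scope.

Record InTree := {
  size : nat;
  root : nat;
  parent : nat -> nat;
  root_lt : (root < size)%nat;
  parent_lt : forall i, (i < size)%nat -> i <> root -> (parent i < size)%nat;
  reaches_root : forall i, (i < size)%nat -> exists k, Nat.iter k parent i = root
}.

Definition is_child (T : InTree) (j i : nat) : Prop :=
  (j < size T)%nat /\ j <> root T /\ parent T j = i.

(* Node weights: processing time w, execution-file size nf, output-file size f. *)
Record Weights := { w : nat -> R; nf : nat -> R; f : nat -> R }.

Definition pebble : Weights := {| w := fun _ => 1; nf := fun _ => 0; f := fun _ => 1 |}.

Record Schedule := { proc : nat -> nat; sigma : nat -> R }.

Definition in_int (a b t : R) : Prop := a <= t /\ t < b.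
Definition ind (a b t : R) : R :=
  if Rle_dec a t then (if Rlt_dec t b then 1 else 0) else 0.

Definition ValidSchedule (T : InTree) (W : Weights) (p : nat) (S : Schedule) : Prop :=
  (forall i, (i < size T)%nat -> 0 <= sigma S i /\ (proc S i < p)%nat) /\
  (forall i j, (i < size T)%nat -> (j < size T)%nat -> i <> j ->
     proc S i = proc S j ->
     ~ (exists t, in_int (sigma S i) (sigma S i + w W i) t /\
                  in_int (sigma S j) (sigma S j + w W j) t)) /\
  (forall i j, (i < size T)%nat -> is_child T j i ->
     sigma S j + w W j <= sigma S i).

Definition Cmax (T : InTree) (W : Weights) (S : Schedule) : R :=
  fold_right Rmax 0 (map (fun i => sigma S i + w W i) (seq 0 (size T))).

Definition mem (T : InTree) (W : Weights) (S : Schedule) (t : R) : R :=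
  fold_right Rplus 0 (map (fun i =>
     f W i * ind (sigma S i)
                 (if Nat.eq_dec i (root T) then Cmax T W S
                  else sigma S (parent T i) + w W (parent T i)) t
     + nf W i * ind (sigma S i) (sigma S i + w W i) t)
   (seq 0 (size T))).

Definition PeakMem (T : InTree) (W : Weights) (S : Schedule) (m : R) : Prop :=
  is_lub (fun y => exists t, y = mem T W S t) m.

Definition MinMakespan (T : InTree) (W : Weights) (p : nat) (c : R) : Prop :=
  (exists S, ValidSchedule T W p S /\ Cmax T W S = c) /\
  (forall S, ValidSchedule T W p S -> c <= Cmax T W S).

Definition MinPeakMem (T : InTree) (W : Weights) (p : nat) (m : R) : Prop :=
  (exists S, ValidSchedule T W p S /\ PeakMem T W S m) /\
  (forall S ms, ValidSchedule T W p S -> PeakMem T W S ms -> m <= ms).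

(* Main.v *)
Require Import Defs.
From Stdlib Require Import Reals List Arith.
Open Scope R_scope.
From Stdlib Require Import Lia Lra ZArith.
Require Import Defs.
Import ListNotations.
Open Scope R_scope.

Definition sumR (l : list nat) (g : nat -> R) : R := fold_right Rplus 0 (map g l).

Lemma sumR_cons a l g : sumR (a :: l) g = g a + sumR l g.
Proof. reflexivity. Qed.

Lemma sumR_app l1 l2 g : sumR (l1 ++ l2) g = sumR l1 g + sumR l2 g.
Proof. induction l1; simpl app; [unfold sumR; simpl; lra|]. rewrite !sumR_cons, IHl1; lra. Qed.

Lemma sumR_le l g h : (forall x, In x l -> g x <= h x) -> sumR l g <= sumR l h.
Proof.
  induction l; intros H; [unfold sumR; simpl; lra|].
  rewrite !sumR_cons. assert (g a <= h a) by (apply H; left; auto).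
  assert (sumR l g <= sumR l h) by (apply IHl; intros; apply H; right; auto). lra.
Qed.

Lemma sumR_ext_in l g h : (forall x, In x l -> g x = h x) -> sumR l g = sumR l h.
Proof.
  induction l; intros H; [reflexivity|].
  rewrite !sumR_cons. rewrite (H a (or_introl eq_refl)). rewrite IHl; auto.
  intros; apply H; right; auto.
Qed.

Lemma sumR_nonneg l g : (forall x, In x l -> 0 <= g x) -> 0 <= sumR l g.
Proof.
  induction l; intros H; [unfold sumR; simpl; lra|].
  rewrite sumR_cons. assert (0 <= g a) by (apply H; left; auto).
  assert (0 <= sumR l g) by (apply IHl; intros; apply H; right; auto). lra.
Qed.

Lemma sumR_zero l : sumR l (fun _ => 0) = 0.
Proof. induction l; [reflexivity|]. rewrite sumR_cons, IHl; lra. Qed.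

Lemma sumR_plus l g h : sumR l (fun x => g x + h x) = sumR l g + sumR l h.
Proof. induction l; [unfold sumR; simpl; lra|]. rewrite !sumR_cons, IHl; lra. Qed.

Lemma sumR_const_seq s K c : sumR (seq s K) (fun _ => c) = INR K * c.
Proof.
  revert s; induction K; intros s; [simpl; unfold sumR; simpl; lra|].
  simpl seq. rewrite sumR_cons, IHK. rewrite S_INR. lra.
Qed.

Lemma sumR_swap l1 l2 (g : nat -> nat -> R) :
  sumR l1 (fun k => sumR l2 (fun q => g q k)) = sumR l2 (fun q => sumR l1 (fun k => g q k)).
Proof.
  induction l1.
  - unfold sumR at 1; simpl. symmetry. apply (sumR_zero l2).
  - rewrite sumR_cons, IHl1. rewrite <- sumR_plus. apply sumR_ext_in. intros; rewrite sumR_cons; reflexivity.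
Qed.

Lemma sumR_split l g a : NoDup l -> In a l ->
  sumR l g = g a + sumR l (fun x => if Nat.eq_dec x a then 0 else g x).
Proof.
  induction l; intros Hnd Hin; [destruct Hin|].
  inversion Hnd; subst. rewrite !sumR_cons.
  destruct (Nat.eq_dec a0 a).
  - subst. rewrite (sumR_ext_in l (fun x => if Nat.eq_dec x a then 0 else g x) g). lra.
    intros x Hx. destruct (Nat.eq_dec x a); [subst; contradiction|auto].
  - destruct Hin as [Hin|Hin]; [congruence|]. rewrite (IHl H2 Hin). lra.
Qed.

Lemma sumR_ge_elem l g a : In a l -> (forall x, In x l -> 0 <= g x) -> g a <= sumR l g.
Proof.
  induction l; intros Hin H; [destruct Hin|]. rewrite sumR_cons.
  destruct Hin as [Hin|Hin].
  - subst. assert (0 <= sumR l g) by (apply sumR_nonneg; intros; apply H; right; auto). lra.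
  - assert (g a <= sumR l g) by (apply IHl; auto; intros; apply H; right; auto).
    assert (0 <= g a0) by (apply H; left; auto). lra.
Qed.

Lemma sumR_two l g a b : NoDup l -> In a l -> In b l -> a <> b ->
  (forall x, In x l -> 0 <= g x) -> g a + g b <= sumR l g.
Proof.
  intros Hnd Ha Hb Hab H. rewrite (sumR_split l g a Hnd Ha).
  pose proof (sumR_ge_elem l (fun x => if Nat.eq_dec x a then 0 else g x) b Hb) as Hge.
  simpl in Hge. destruct (Nat.eq_dec b a); [congruence|].
  assert (g b <= sumR l (fun x => if Nat.eq_dec x a then 0 else g x)).
  { apply Hge. intros x Hx. destruct (Nat.eq_dec x a); [lra|auto]. }
  lra.
Qed.

Lemma sumR_three l g a b c : NoDup l -> In a l -> In b l -> In c l -> a <> b -> a <> c -> b <> c ->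
  (forall x, In x l -> 0 <= g x) -> g a + g b + g c <= sumR l g.
Proof.
  intros Hnd Ha Hb Hc Hab Hac Hbc H. rewrite (sumR_split l g a Hnd Ha).
  pose proof (sumR_two l (fun x => if Nat.eq_dec x a then 0 else g x) b c Hnd Hb Hc Hbc) as Hge.
  simpl in Hge. destruct (Nat.eq_dec b a); [congruence|]. destruct (Nat.eq_dec c a); [congruence|].
  assert (g b + g c <= sumR l (fun x => if Nat.eq_dec x a then 0 else g x)).
  { apply Hge. intros x Hx. destruct (Nat.eq_dec x a); [lra|auto]. }
  lra.
Qed.

Lemma sumR_le_one l g : NoDup l -> (forall x, In x l -> 0 <= g x <= 1) ->
  (forall x y, In x l -> In y l -> g x <> 0 -> g y <> 0 -> x = y) -> sumR l g <= 1.
Proof.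
  induction l; intros Hnd Hb Hu; [unfold sumR; simpl; lra|].
  inversion Hnd; subst. rewrite sumR_cons.
  destruct (Req_dec (g a) 0) as [E|E].
  - rewrite E. assert (sumR l g <= 1); [|lra].
    apply IHl; auto. intros; apply Hb; right; auto. intros; apply Hu; auto; right; auto.
  - rewrite (sumR_ext_in l g (fun _ => 0)). rewrite sumR_zero.
    assert (g a <= 1) by (apply Hb; left; auto). lra.
    intros x Hx. destruct (Req_dec (g x) 0) as [E'|E']; auto.
    exfalso. assert (x = a) by (apply Hu; auto; [right|left]; auto). subst; contradiction.
Qed.

Lemma fmax_ge (G : nat -> R) l x : In x l -> G x <= fold_right Rmax 0 (map G l).
Proof.
  induction l; intros Hin; [destruct Hin|]. simpl. destruct Hin as [Hin|Hin].
  - subst; apply Rmax_l.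
  - eapply Rle_trans; [apply IHl; auto|apply Rmax_r].
Qed.

Lemma fmax_nonneg (G : nat -> R) l : 0 <= fold_right Rmax 0 (map G l).
Proof. induction l; simpl; [lra|]. eapply Rle_trans; [apply IHl|apply Rmax_r]. Qed.

Lemma fmax_le (G : nat -> R) l c : 0 <= c -> (forall x, In x l -> G x <= c) ->
  fold_right Rmax 0 (map G l) <= c.
Proof.
  induction l; intros Hc H; simpl; [lra|]. apply Rmax_lub.
  apply H; left; auto. apply IHl; auto; intros; apply H; right; auto.
Qed.

Ltac ind_cases := unfold ind; repeat match goal with
  | |- context [Rle_dec ?x ?y] => destruct (Rle_dec x y)
  | |- context [Rlt_dec ?x ?y] => destruct (Rlt_dec x y)
  | H : context [Rle_dec ?x ?y] |- _ => destruct (Rle_dec x y)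
  | H : context [Rlt_dec ?x ?y] |- _ => destruct (Rlt_dec x y)
  end.

Lemma ind_bounds a b t : 0 <= ind a b t <= 1.
Proof. ind_cases; lra. Qed.

Lemma ind_nz a b t : ind a b t <> 0 -> a <= t < b.
Proof. ind_cases; intros; lra. Qed.

Lemma ind_one a b t : a <= t < b -> ind a b t = 1.
Proof. intros; ind_cases; lra. Qed.

Lemma ind_split3 a e t : ind a e t <= ind a (a+1) t + ind (a+1) (a+1+1) t + ind (a+1+1) e t.
Proof. ind_cases; lra. Qed.

Lemma int_unique (a b : nat) (x : R) : INR a <= x < INR a + 1 -> INR b <= x < INR b + 1 -> a = b.
Proof.
  intros [H1 H2] [H3 H4].
  assert (a < S b)%nat by (apply INR_lt; rewrite S_INR; lra).
  assert (b < S a)%nat by (apply INR_lt; rewrite S_INR; lra). lia.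
Qed.

Lemma floor_ex (t : R) : 0 <= t -> exists m : nat, INR m <= t < INR m + 1.
Proof.
  intros Ht. destruct (archimed t) as [H1 H2].
  assert (0 < up t)%Z by (apply lt_IZR; lra).
  exists (Z.to_nat (up t - 1)).
  rewrite INR_IZR_INZ, Z2Nat.id by lia. rewrite minus_IZR. simpl. lra.
Qed.

Lemma ceil_ex (t : R) : 0 <= t -> exists k : nat, t <= INR k < t + 1.
Proof.
  intros Ht. destruct (floor_ex t Ht) as [m Hm].
  destruct (Req_dec (INR m) t).
  - exists m; lra.
  - exists (S m); rewrite S_INR; lra.
Qed.

Definition par (L q : nat) : nat := if Nat.eqb (q mod (L+1)) L then (q + (L+1))%nat else (q + 1)%nat.

Lemma decomp L q : exists a b, (b <= L)%nat /\ q = (a*(L+1)+b)%nat.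
Proof.
  exists (q / (L+1))%nat, (q mod (L+1))%nat.
  pose proof (Nat.div_mod q (L+1) ltac:(lia)).
  pose proof (Nat.mod_bound_pos q (L+1) ltac:(lia) ltac:(lia)). split; [lia|]. nia.
Qed.

Lemma mod_form L a b : (b <= L)%nat -> ((a*(L+1)+b) mod (L+1) = b)%nat.
Proof. intros. symmetry. apply (Nat.mod_unique _ _ a); nia. Qed.

Lemma div_form L a b : (b <= L)%nat -> ((a*(L+1)+b) / (L+1) = a)%nat.
Proof. intros. symmetry. apply (Nat.div_unique _ _ _ b); nia. Qed.

Lemma par_form L a b : (b <= L)%nat ->
  par L (a*(L+1)+b) = (if Nat.eqb b L then a*(L+1)+b+(L+1) else a*(L+1)+b+1)%nat.
Proof. intros; unfold par; rewrite mod_form; auto. Qed.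

Lemma par_gt L q : (q < par L q)%nat.
Proof. unfold par; destruct (Nat.eqb _ _); lia. Qed.

Lemma root_form p L : (1 <= p)%nat -> (p*(L+1)-1 = (p-1)*(L+1)+L)%nat.
Proof. intros; destruct p; [lia|]. simpl. rewrite Nat.sub_0_r. nia. Qed.

Lemma blk_lt p L a b : (b <= L)%nat -> (a*(L+1)+b < p*(L+1))%nat -> (a < p)%nat.
Proof.
  intros Hb H. destruct (Nat.lt_ge_cases a p) as [|Hc]; auto.
  assert (p*(L+1) <= a*(L+1))%nat by (apply Nat.mul_le_mono_r; auto). lia.
Qed.

Lemma par_lt p L i : (2 <= p)%nat -> (i < p*(L+1))%nat -> i <> (p*(L+1)-1)%nat -> (par L i < p*(L+1))%nat.
Proof.
  intros Hp Hi Hr. destruct (decomp L i) as (a & b & Hb & ->).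
  pose proof (blk_lt p L a b Hb Hi). rewrite par_form by auto.
  rewrite root_form in Hr by lia.
  destruct (Nat.eqb_spec b L).
  - subst. assert (a <> p-1)%nat by (intro; subst; apply Hr; reflexivity).
    assert ((a+1)*(L+1) <= p*(L+1))%nat by (apply Nat.mul_le_mono_r; lia). nia.
  - assert (a*(L+1) + (L+1) <= p*(L+1))%nat.
    { replace (a*(L+1)+(L+1))%nat with ((a+1)*(L+1))%nat by ring. apply Nat.mul_le_mono_r; lia. }
    lia.
Qed.

Lemma reach p L : (2 <= p)%nat -> forall d i, (i < p*(L+1))%nat -> (p*(L+1) - i <= d)%nat ->
  exists k, Nat.iter k (par L) i = (p*(L+1)-1)%nat.
Proof.
  intros Hp d. induction d; intros i Hi Hd; [lia|].
  destruct (Nat.eq_dec i (p*(L+1)-1)) as [E|E]; [exists 0%nat; simpl; auto|].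
  pose proof (par_lt p L i Hp Hi E). pose proof (par_gt L i).
  destruct (IHd (par L i)) as [k Hk]; auto; [lia|].
  exists (S k). rewrite Nat.iter_succ_r. auto.
Qed.

Definition mkT (p L : nat) (Hp : (2 <= p)%nat) : InTree.
Proof.
  refine {| size := p*(L+1); root := p*(L+1)-1; parent := par L |}.
  - nia.
  - intros; apply par_lt; auto.
  - intros i Hi. apply (reach p L Hp (p*(L+1)) i Hi). lia.
Defined.

Lemma mk_valid (T : InTree) (p : nat) (pr s : nat -> nat) :
  (forall i, (i < size T)%nat -> (pr i < p)%nat) ->
  (forall i j, (i < size T)%nat -> (j < size T)%nat -> i <> j -> pr i = pr j -> s i <> s j) ->
  (forall j, (j < size T)%nat -> j <> root T -> (s j + 1 <= s (parent T j))%nat) ->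
  ValidSchedule T pebble p {| proc := pr; Defs.sigma := fun i => INR (s i) |}.
Proof.
  intros H1 H2 H3. split; [|split].
  - intros i Hi; simpl; split; [apply pos_INR|auto].
  - intros i j Hi Hj Hij Hp [t [[A B] [C D]]]. simpl in *.
    apply (H2 i j Hi Hj Hij Hp). apply (int_unique _ _ t); lra.
  - intros i j Hi [Hj [Hr Hpj]]. simpl. subst i.
    pose proof (H3 j Hj Hr). apply le_INR in H. rewrite plus_INR in H. simpl in H. lra.
Qed.

Lemma valid_prec T p S i : ValidSchedule T pebble p S -> (i < size T)%nat -> i <> root T ->
  Defs.sigma S i + 1 <= Defs.sigma S (parent T i).
Proof.
  intros [_ [_ H]] Hi Hr. apply (H (parent T i) i); [apply parent_lt; auto|].
  split; auto.
Qed.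

Lemma valid_nonneg T p S i : ValidSchedule T pebble p S -> (i < size T)%nat -> 0 <= Defs.sigma S i.
Proof. intros [H _] Hi. apply H; auto. Qed.

Lemma cmax_ge T S i : (i < size T)%nat -> Defs.sigma S i + 1 <= Cmax T pebble S.
Proof.
  intros Hi. unfold Cmax. apply (fmax_ge (fun i => Defs.sigma S i + w pebble i)).
  apply in_seq; lia.
Qed.

Definition G T S t i : R :=
  Defs.ind (Defs.sigma S i)
    (if Nat.eq_dec i (root T) then Cmax T pebble S
     else Defs.sigma S (parent T i) + 1) t.

Lemma mem_eq T S t : mem T pebble S t = sumR (seq 0 (size T)) (G T S t).
Proof.
  unfold mem, sumR. f_equal. apply map_ext. intros i. unfold G. simpl. ring.
Qed.

Lemma G_nonneg T S t i : 0 <= G T S t i.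
Proof. apply ind_bounds. Qed.

Lemma mem_root_ge3 T p S c1 c2 : ValidSchedule T pebble p S ->
  (c1 < size T)%nat -> (c2 < size T)%nat -> c1 <> c2 -> c1 <> root T -> c2 <> root T ->
  parent T c1 = root T -> parent T c2 = root T ->
  3 <= mem T pebble S (Defs.sigma S (root T)).
Proof.
  intros V H1 H2 H12 H1r H2r P1 P2. rewrite mem_eq.
  pose proof (root_lt T) as Hr.
  pose proof (valid_prec T p S c1 V H1 H1r). pose proof (valid_prec T p S c2 V H2 H2r).
  rewrite P1 in H. rewrite P2 in H0.
  pose proof (valid_nonneg T p S c1 V H1).
  pose proof (cmax_ge T S (root T) Hr).
  assert (G T S (Defs.sigma S (root T)) (root T) + G T S (Defs.sigma S (root T)) c1
        + G T S (Defs.sigma S (root T)) c2 <= sumR (seq 0 (size T)) (G T S (Defs.sigma S (root T)))).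
  { apply sumR_three; try apply seq_NoDup; try (apply in_seq; lia); auto.
    intros; apply G_nonneg. }
  assert (E0 : G T S (Defs.sigma S (root T)) (root T) = 1).
  { unfold G. destruct (Nat.eq_dec (root T) (root T)); [|congruence]. apply ind_one; lra. }
  assert (E1 : G T S (Defs.sigma S (root T)) c1 = 1).
  { unfold G. destruct (Nat.eq_dec c1 (root T)); [congruence|]. rewrite P1. apply ind_one; lra. }
  pose proof (valid_nonneg T p S c2 V H2).
  assert (E2 : G T S (Defs.sigma S (root T)) c2 = 1).
  { unfold G. destruct (Nat.eq_dec c2 (root T)); [congruence|]. rewrite P2. apply ind_one; lra. }
  lra.
Qed.

Lemma peak_ge T S ms t : PeakMem T pebble S ms -> mem T pebble S t <= ms.
Proof. intros [H _]. apply H. exists t; auto. Qed.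

Lemma sum_two_seq K g k : (k + 2 <= K)%nat -> (forall x, 0 <= g x) -> g k + g (S k) <= sumR (seq 0 K) g.
Proof.
  intros Hk Hg. apply sumR_two; try apply seq_NoDup; try (apply in_seq; lia); auto.
Qed.

Lemma tradeoff T p Sc ms K : (1 <= size T)%nat -> root T = (size T - 1)%nat ->
  ValidSchedule T pebble p Sc -> PeakMem T pebble Sc ms -> Cmax T pebble Sc <= INR K ->
  2 * INR (size T - 1) <= INR K * ms.
Proof.
  intros Hs Hr V Pk HK.
  rewrite <- (sumR_const_seq 0 K ms).
  eapply Rle_trans; [|apply sumR_le with (g := fun k => mem T pebble Sc (INR k)); intros; apply peak_ge; auto].
  rewrite (sumR_ext_in _ _ (fun k => sumR (seq 0 (size T)) (fun i => G T Sc (INR k) i)))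
    by (intros; apply mem_eq).
  rewrite (sumR_swap (seq 0 K) (seq 0 (size T)) (fun i k => G T Sc (INR k) i)).
  replace (size T) with (size T - 1 + 1)%nat at 2 by lia.
  rewrite seq_app, sumR_app.
  assert (0 <= sumR (seq (0 + (size T - 1)) 1) (fun q => sumR (seq 0 K) (fun k => G T Sc (INR k) q))).
  { apply sumR_nonneg; intros; apply sumR_nonneg; intros; apply G_nonneg. }
  assert (2 * INR (size T - 1) <= sumR (seq 0 (size T - 1)) (fun q => sumR (seq 0 K) (fun k => G T Sc (INR k) q))); [|lra].
  rewrite Rmult_comm. rewrite <- (sumR_const_seq 0 (size T - 1) 2).
  apply sumR_le. intros q Hq. apply in_seq in Hq.
  assert (Hqs : (q < size T)%nat) by lia. assert (Hqr : q <> root T) by lia.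
  pose proof (valid_prec T p Sc q V Hqs Hqr).
  pose proof (valid_nonneg T p Sc q V Hqs).
  pose proof (cmax_ge T Sc (parent T q) (parent_lt T q Hqs Hqr)). simpl w in H2.
  destruct (ceil_ex _ H1) as [k0 Hk0].
  assert (k0 + 2 <= K)%nat.
  { assert (INR (S k0) < INR K) by (rewrite S_INR; lra). apply INR_lt in H3. lia. }
  eapply Rle_trans; [|apply (sum_two_seq K (fun k => G T Sc (INR k) q) k0 H3); intros; apply G_nonneg].
  unfold G. destruct (Nat.eq_dec q (root T)); [contradiction|].
  rewrite !ind_one; [lra| |]; rewrite ?S_INR; lra.
Qed.

Definition sp (L q : nat) : nat := if Nat.eqb (q mod (L+1)) L then (L + q/(L+1))%nat else (q mod (L+1))%nat.
Definition prp (L q : nat) : nat := if Nat.eqb (q mod (L+1)) L then 0%nat else (q/(L+1))%nat.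

Lemma sp_form L a b : (b <= L)%nat -> sp L (a*(L+1)+b) = (if Nat.eqb b L then L + a else b)%nat.
Proof. intros; unfold sp; rewrite mod_form, div_form; auto. Qed.
Lemma prp_form L a b : (b <= L)%nat -> prp L (a*(L+1)+b) = (if Nat.eqb b L then 0 else a)%nat.
Proof. intros; unfold prp; rewrite mod_form, div_form; auto. Qed.

Definition Spar L : Schedule := {| proc := prp L; Defs.sigma := fun i => INR (sp L i) |}.
Definition Sseq : Schedule := {| proc := fun _ => 0%nat; Defs.sigma := fun i => INR i |}.

Lemma Spar_valid p L Hp : ValidSchedule (mkT p L Hp) pebble p (Spar L).
Proof.
  apply mk_valid; simpl.
  - intros i Hi. destruct (decomp L i) as (a & b & Hb & ->).
    pose proof (blk_lt p L a b Hb Hi). rewrite prp_form by auto. destruct (Nat.eqb b L); lia.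
  - intros i j Hi Hj Hij. destruct (decomp L i) as (a & b & Hb & ->).
    destruct (decomp L j) as (c & d & Hd & ->).
    rewrite !prp_form, !sp_form by auto.
    destruct (Nat.eqb_spec b L), (Nat.eqb_spec d L); intros Hpr Hs.
    + assert (a = c) by lia. subst a. apply Hij; lia.
    + lia.
    + lia.
    + subst a. apply Hij; lia.
  - intros j Hj Hr. destruct (decomp L j) as (c & d & Hd & ->).
    rewrite par_form by auto. destruct (Nat.eqb_spec d L).
    + subst. replace (c*(L+1)+L+(L+1))%nat with ((c+1)*(L+1)+L)%nat by ring.
      rewrite !sp_form by lia. rewrite Nat.eqb_refl. lia.
    + replace (c*(L+1)+d+1)%nat with (c*(L+1)+(d+1))%nat by ring.
      rewrite !sp_form by lia. destruct (Nat.eqb_spec d L); [contradiction|].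
      destruct (Nat.eqb (d+1) L); lia.
Qed.

Lemma Spar_cmax p L Hp : Cmax (mkT p L Hp) pebble (Spar L) = INR (L + p).
Proof.
  unfold Cmax. simpl. apply Rle_antisym.
  - apply fmax_le; [apply pos_INR|]. intros i Hi. apply in_seq in Hi.
    destruct (decomp L i) as (a & b & Hb & ->).
    assert (a < p)%nat by (apply (blk_lt p L a b); lia).
    rewrite sp_form by auto. rewrite <- S_INR. apply le_INR. destruct (Nat.eqb b L); lia.
  - assert (Hr : In (p*(L+1)-1)%nat (seq 0 (p*(L+1)))) by (apply in_seq; nia).
    eapply Rle_trans; [|apply (fmax_ge (fun i => INR (sp L i) + 1) _ _ Hr)].
    rewrite root_form by lia. rewrite sp_form by lia. rewrite Nat.eqb_refl.
    rewrite <- S_INR. apply le_INR. lia.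
Qed.

Lemma cmax_lb p L Hp Sc : ValidSchedule (mkT p L Hp) pebble p Sc -> INR (L + p) <= Cmax (mkT p L Hp) pebble Sc.
Proof.
  intros V.
  assert (H1 : forall r, (r <= L)%nat -> INR r <= Defs.sigma Sc r).
  { induction r; intros Hr.
    - simpl. apply (valid_nonneg _ p Sc 0 V). simpl. nia.
    - pose proof (valid_prec (mkT p L Hp) p Sc r V) as Hv. simpl in Hv.
      assert (par L r = S r)%nat.
      { replace r with (0*(L+1)+r)%nat at 1 by ring. rewrite par_form by lia.
        destruct (Nat.eqb_spec r L); lia. }
      rewrite H in Hv. rewrite S_INR. assert (INR r <= Defs.sigma Sc r) by (apply IHr; lia).
      assert (Defs.sigma Sc r + 1 <= Defs.sigma Sc (S r)) by (apply Hv; nia). lra. }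
  assert (H2 : forall j, (j < p)%nat -> INR (L + j) <= Defs.sigma Sc (j*(L+1)+L)).
  { induction j; intros Hj.
    - simpl. rewrite Nat.add_0_r. apply H1; lia.
    - pose proof (valid_prec (mkT p L Hp) p Sc (j*(L+1)+L) V) as Hv. simpl in Hv.
      rewrite par_form, Nat.eqb_refl in Hv by lia.
      replace (j*(L+1)+L+(L+1))%nat with (S j*(L+1)+L)%nat in Hv by ring.
      assert (INR (L + j) <= Defs.sigma Sc (j*(L+1)+L)) by (apply IHj; lia).
      assert ((j+1)*(L+1) <= p*(L+1))%nat by (apply Nat.mul_le_mono_r; lia).
      assert (Defs.sigma Sc (j * (L + 1) + L) + 1 <= Defs.sigma Sc (S j * (L + 1) + L)) by (apply Hv; nia).
      replace (L + S j)%nat with (S (L + j)) by lia. rewrite S_INR. lra. }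
  assert (Hr : (p*(L+1)-1 < size (mkT p L Hp))%nat) by (simpl; nia).
  pose proof (cmax_ge _ Sc _ Hr). simpl in H. rewrite root_form in H by lia.
  assert (INR (L + (p-1)) <= Defs.sigma Sc ((p-1)*(L+1)+L)) by (apply H2; lia).
  replace (L+p)%nat with (S (L + (p-1))) by lia. rewrite S_INR. lra.
Qed.

Lemma minmk p L Hp : MinMakespan (mkT p L Hp) pebble p (INR (L + p)).
Proof.
  split.
  - exists (Spar L). split; [apply Spar_valid|apply Spar_cmax].
  - intros S V. apply cmax_lb; auto.
Qed.

Lemma Sseq_valid p L Hp : ValidSchedule (mkT p L Hp) pebble p Sseq.
Proof.
  apply mk_valid with (s := fun i => i); simpl.
  - intros; lia.
  - intros; auto.
  - intros j _ _. pose proof (par_gt L j). lia.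
Qed.


Lemma mem_ge3 p L Hp Sc : (1 <= L)%nat -> ValidSchedule (mkT p L Hp) pebble p Sc ->
  3 <= mem (mkT p L Hp) pebble Sc (Defs.sigma Sc (root (mkT p L Hp))).
Proof.
  intros HL V. pose proof Hp as Hp'.
  apply (mem_root_ge3 _ p Sc ((p-1)*(L+1)+(L-1)) ((p-2)*(L+1)+L) V); simpl.
  - assert ((p-1)*(L+1) + (L+1) <= p*(L+1))%nat.
    { replace ((p-1)*(L+1) + (L+1))%nat with (((p-1)+1)*(L+1))%nat by ring.
      apply Nat.mul_le_mono_r; lia. } lia.
  - assert ((p-2)*(L+1) + (L+1) <= p*(L+1))%nat.
    { replace ((p-2)*(L+1) + (L+1))%nat with (((p-2)+1)*(L+1))%nat by ring.
      apply Nat.mul_le_mono_r; lia. } lia.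
  - assert ((p-2)*(L+1) + (L+1) = (p-1)*(L+1))%nat.
    { replace ((p-2)*(L+1) + (L+1))%nat with (((p-2)+1)*(L+1))%nat by ring. f_equal. lia. } lia.
  - rewrite root_form by lia. lia.
  - rewrite root_form by lia.
    assert ((p-2)*(L+1) + (L+1) = (p-1)*(L+1))%nat.
    { replace ((p-2)*(L+1) + (L+1))%nat with (((p-2)+1)*(L+1))%nat by ring. f_equal. lia. } lia.
  - rewrite root_form by lia. rewrite par_form by lia. destruct (Nat.eqb_spec (L-1) L); lia.
  - rewrite root_form by lia. rewrite par_form by lia. rewrite Nat.eqb_refl.
    assert ((p-2)*(L+1) + (L+1) = (p-1)*(L+1))%nat.
    { replace ((p-2)*(L+1) + (L+1))%nat with (((p-2)+1)*(L+1))%nat by ring. f_equal. lia. } lia.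
Qed.

Lemma Sseq_cmax_le p L Hp : Cmax (mkT p L Hp) pebble Sseq <= INR (p*(L+1)).
Proof.
  unfold Cmax; simpl. apply fmax_le; [apply pos_INR|].
  intros i Hi. apply in_seq in Hi. rewrite <- S_INR. apply le_INR. lia.
Qed.

Lemma Sseq_mem_le3 p L Hp t : mem (mkT p L Hp) pebble Sseq t <= 3.
Proof.
  rewrite mem_eq. set (T := mkT p L Hp).
  set (A := fun i : nat => Defs.ind (INR i) (INR i + 1) t).
  set (B := fun i : nat => Defs.ind (INR i + 1) (INR i + 1 + 1) t).
  set (C := fun i : nat => Defs.ind (INR i + 1 + 1)
        (if Nat.eq_dec i (root T) then Cmax T pebble Sseq else INR (parent T i) + 1) t).
  eapply Rle_trans.
  { apply sumR_le with (h := fun i => A i + B i + C i). intros i _. unfold G, A, B, C. simpl Defs.sigma.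
    apply ind_split3. }
  rewrite !sumR_plus.
  assert (sumR (seq 0 (size T)) A <= 1).
  { apply sumR_le_one; [apply seq_NoDup| intros; apply ind_bounds|].
    intros x y _ _ Hx Hy. apply ind_nz in Hx, Hy. apply (int_unique x y t); lra. }
  assert (sumR (seq 0 (size T)) B <= 1).
  { apply sumR_le_one; [apply seq_NoDup| intros; apply ind_bounds|].
    intros x y _ _ Hx Hy. apply ind_nz in Hx, Hy. apply (int_unique x y (t-1)); lra. }
  assert (HC : forall i, In i (seq 0 (size T)) -> C i <> 0 ->
     exists a, i = (a*(L+1)+L)%nat /\ INR i + 1 + 1 <= t /\ t < INR (i + (L+1)) + 1).
  { intros i Hi Hc. apply in_seq in Hi. apply ind_nz in Hc. unfold T in *; simpl in *.
    destruct (Nat.eq_dec i (p*(L+1)-1)) as [E|E].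
    - pose proof (Sseq_cmax_le p L Hp). unfold T in Hc. 
      assert (INR (p*(L+1)) <= INR i + 1) by (rewrite <- S_INR; apply le_INR; lia). lra.
    - destruct (decomp L i) as (a & b & Hb & Ei). exists a.
      rewrite Ei, par_form in Hc by auto. rewrite Ei.
      destruct (Nat.eqb_spec b L).
      + subst b. rewrite <- Ei in Hc |- *. split; [reflexivity|]. split; lra.
      + rewrite <- Ei in Hc. rewrite plus_INR in Hc. simpl in Hc. lra. }
  assert (sumR (seq 0 (size T)) C <= 1).
  { apply sumR_le_one; [apply seq_NoDup| intros; apply ind_bounds|].
    intros x y Hx Hy Hcx Hcy.
    destruct (HC x Hx Hcx) as (a & Ex & X1 & X2).
    destruct (HC y Hy Hcy) as (c & Ey & Y1 & Y2).
    destruct (Nat.lt_trichotomy a c) as [Hac|[Hac|Hac]].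
    - exfalso. assert ((a+1)*(L+1) <= c*(L+1))%nat by (apply Nat.mul_le_mono_r; lia).
      assert (INR (y + 1) < INR (x + (L+1))) by (rewrite plus_INR; simpl; lra).
      apply INR_lt in H2. nia.
    - subst; auto.
    - exfalso. assert ((c+1)*(L+1) <= a*(L+1))%nat by (apply Nat.mul_le_mono_r; lia).
      assert (INR (x + 1) < INR (y + (L+1))) by (rewrite plus_INR; simpl; lra).
      apply INR_lt in H2. nia. }
  lra.
Qed.

Lemma minpm p L Hp : (1 <= L)%nat -> MinPeakMem (mkT p L Hp) pebble p 3.
Proof.
  intros HL. split.
  - exists Sseq. split; [apply Sseq_valid|]. split.
    + intros y [t ->]. apply Sseq_mem_le3.
    + intros b Hb. eapply Rle_trans; [apply (mem_ge3 p L Hp Sseq HL (Sseq_valid p L Hp))|].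
      apply Hb. eexists; reflexivity.
  - intros Sc ms V Pk. eapply Rle_trans; [apply (mem_ge3 p L Hp Sc HL V)|]. apply peak_ge; auto.
Qed.

Lemma nat_above (x : R) : exists n : nat, (1 <= n)%nat /\ x < INR n.
Proof.
  destruct (archimed x) as [H1 _].
  exists (S (Z.to_nat (up x))). split; [lia|].
  rewrite S_INR. destruct (Z_lt_le_dec (up x) 0).
  - replace (Z.to_nat (up x)) with 0%nat by lia. simpl. assert (IZR (up x) < 0) by (apply IZR_lt; lia). lra.
  - rewrite INR_IZR_INZ, Z2Nat.id by lia. lra.
Qed.

Theorem theorem3 (p : nat) (alpha beta : R) :
  (2 <= p)%nat -> 0 < alpha -> 0 < beta ->
  alpha * beta < 2 * INR p / (INR (Nat.log2_up p) + 2) ->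
  exists (T : InTree) (cstar mstar : R),
    MinMakespan T pebble p cstar /\ MinPeakMem T pebble p mstar /\
    forall S : Schedule, ValidSchedule T pebble p S ->
      forall ms : R, PeakMem T pebble S ms ->
        ~ (Cmax T pebble S <= alpha * cstar /\ ms <= beta * mstar).
Proof.
  intros Hp Ha Hb Hab.
  assert (Hlg : (1 <= Nat.log2_up p)%nat) by (apply Nat.log2_up_pos; lia).
  apply le_INR in Hlg. simpl in Hlg.
  set (X := INR (Nat.log2_up p) + 2) in *.
  assert (HX : 3 <= X) by (unfold X; lra).
  assert (H3 : alpha * beta * X < 2 * INR p).
  { apply Rmult_lt_compat_r with (r := X) in Hab; [|lra].
    assert (2 * INR p / X * X = 2 * INR p) by (field; lra). lra. }
  set (AB := alpha * beta) in *.
  assert (HAB : 0 < AB) by (unfold AB; nra).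
  assert (H3' : 3 * AB < 2 * INR p) by nra.
  destruct (nat_above ((3 * AB * INR p + 3 * beta + 2) / (2 * INR p - 3 * AB))) as [L [HL HLx]].
  assert (HLy : 3 * AB * INR p + 3 * beta + 2 < INR L * (2 * INR p - 3 * AB)).
  { apply Rmult_lt_compat_r with (r := 2 * INR p - 3 * AB) in HLx; [|lra].
    assert ((3 * AB * INR p + 3 * beta + 2) / (2 * INR p - 3 * AB) * (2 * INR p - 3 * AB)
      = 3 * AB * INR p + 3 * beta + 2) by (field; lra). lra. }
  exists (mkT p L Hp), (INR (L + p)), 3.
  split; [apply minmk|]. split; [apply minpm; auto|].
  intros Sc V ms Pk [HC HM].
  assert (Hms3 : 3 <= ms) by (destruct (minpm p L Hp HL) as [_ H]; eapply H; eauto).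
  assert (Hc0 : 0 <= Cmax (mkT p L Hp) pebble Sc) by (unfold Cmax; apply fmax_nonneg).
  destruct (ceil_ex _ Hc0) as [K [HK1 HK2]].
  pose proof (tradeoff (mkT p L Hp) p Sc ms K) as Ht. simpl in Ht.
  assert (Ht' : 2 * INR (p * (L + 1) - 1) <= INR K * ms).
  { apply Ht; auto; nia. }
  rewrite minus_INR in Ht' by nia. rewrite mult_INR, plus_INR in Ht'. simpl in Ht'.
  rewrite plus_INR in HC.
  assert (HK : INR K <= alpha * (INR L + INR p) + 1) by lra.
  assert (HK0 : 0 <= INR K) by apply pos_INR.
  assert (INR K * ms <= (alpha * (INR L + INR p) + 1) * (beta * 3)).
  { apply Rmult_le_compat; lra. }
  assert ((alpha * (INR L + INR p) + 1) * (beta * 3) = 3 * AB * INR L + 3 * AB * INR p + 3 * beta)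
    by (unfold AB; ring).
  assert (INR L * (2 * INR p - 3 * AB) = 2 * INR p * INR L - 3 * AB * INR L) by ring.
  assert (1 <= INR p) by (apply (le_INR 1); lia).
  nra.
Qed.
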